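(* Fix a dynamic environment and suppose the agent is myopic. For any mechanism $M=(\pi,p)$ that is IC for a myopic agent, there is another mechanism $M'=(\pi',p')$ that is IC for a myopic agent (and is IR whenever $M$ is) such that (i) $u_P^{M'}(\emptyset)\ge u_P^M(\emptyset)$, and (ii) for all $h\in\mathcal H$ and $s\in\mathcal S$, $\pi'(h,s)$ and $p'(h,s)$ depend only on $|h|$, $s_p$, $a_p$ and $s$, where $(s_p,a_p)=\mathrm{last}(h)$. Moreover, this holds regardless of whether payments are allowed and of which IR constraints (none, overall, dynamic) are required.
   Context: A dynamic environment consists of a time horizon $T\in\mathbb N$, a finite state space $\mathcal S$, a finite action space $\mathcal A$, valuation functions $v^P_t,v^A_t:\mathcal S\times\mathcal A\to\mathbb R$ ($t\in[T]$) of the principal and the agent, an initial distribution $P_0\in\Delta(\mathcal S)$, and transition operators $P_t:\mathcal S\times\mathcal A\to\Delta(\mathcal S)$ with $P_t(s,a,s')$ the probability of next state $s'$ after action $a$ in state $s$ at time $t$. For $t\ge1$, $\mathcal H_t$ is the set of sequences $(s_1,a_1,\dots,s_t,a_t)$; $\mathcal H_0=\{\emptyset\}$; $\mathcal H=\bigcup_{t=0}^{T-1}\mathcal H_t$; $h+(s,a)$ appends $(s,a)$; for $h=(s_1,a_1,\dots,s_t,a_t)$, $\mathrm{last}(h)=(s_t,a_t)$, and $\mathrm{last}(\emptyset)$ is an arbitrary fixed state-action pair. A mechanism $M=(\pi,p)$ has $\pi:\mathcal H\times\mathcal S\to\Delta(\mathcal A)$ and payments $p:\mathcal H\times\mathcal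 S\to\mathbb R$ (agent to principal; $p\equiv0$ if payments are not allowed). Principal's onward utility: $u_P^M(h,s)=\sum_a\pi(h,s,a)\big(v^P_{|h|+1}(s,a)+\sum_{s'}P_{|h|+1}(s,a,s')u_P^M(h+(s,a),s')\big)+p(h,s)$ (zero when $|h|=T$), $u_P^M(\emptyset)=\sum_sP_0(s)u_P^M(\emptyset,s)$. Myopic agent's utility: $u_A^M(h,s)=\sum_a\pi(h,s,a)v^A_{|h|+1}(s,a)-p(h,s)$. A reporting strategy $r:\mathcal H\times\mathcal S\to\mathcal S$ induces for $h=(s_1,a_1,\dots,s_t,a_t)$ the reported history $r(h)=(s'_1,a_1,\dots,s'_t,a_t)$ with $s'_i=r((s_1,a_1,\dots,s_{i-1},a_{i-1}),s_i)$, and $u_A^{M,r}(h,s)=\sum_a\pi(r(h),r(h,s),a)v^A_{|h|+1}(s,a)-p(r(h),r(h,s))$. $M$ is IC for a myopic agent if for all $h\in\mathcal H,s\in\mathcal S$ and every $r$ with $r(h',s')=s'$ whenever $|h'|<|h|$, $u_A^M(h,s)\ge u_A^{M,r}(h,s)$. Overall IR: $\sum_sP_0(s)u_A^M(\emptyset,s)\ge0$; dynamic IR: $u_A^M(h,s)\ge0$ for all $h\in\mathcal H,s\in\mathcal S$. *)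

(* Defs.v *)
From mathcomp Require Import all_boot all_order all_algebra.
Set Implicit Arguments. Unset Strict Implicit. Unset Printing Implicit Defensive.
Import Order.TTheory GRing.Theory Num.Theory.
Local Open Scope ring_scope.

(* Histories h = (s_1,a_1,...,s_t,a_t) are sequences [:: (s_1,a_1); ...; (s_t,a_t)],
   h + (s,a) is [rcons h (s,a)], |h| is [size h].  Time indices t in [T] are
   1-based: at history h the current period is (size h).+1.
   A mechanism is a pair of functions (pi, p); only their values on
   H = {h | size h < T} matter. *)

Section Dyn.
Variables (R : realFieldType) (S A : finType) (T : nat).
Local Notation hist := (seq (S * A)).
Variables (vP vA : nat -> S -> A -> R) (P0 : S -> R) (Pt : nat -> S -> A -> S -> R).

Definition is_env : Prop :=
  [/\ (forall s, 0 <= P0 s), \sum_s P0 s = 1 &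
      forall t s a, (1 <= t <= T)%N ->
        (forall s', 0 <= Pt t s a s') /\ \sum_s' Pt t s a s' = 1].

Definition is_mech (pi : hist -> S -> A -> R) : Prop :=
  forall h s, (size h < T)%N -> (forall a, 0 <= pi h s a) /\ \sum_a pi h s a = 1.

Definition payments_ok (allowed : bool) (p : hist -> S -> R) : Prop :=
  ~~ allowed -> forall h s, (size h < T)%N -> p h s = 0.

Fixpoint uP_fuel (pi : hist -> S -> A -> R) (p : hist -> S -> R)
    (k : nat) (h : hist) (s : S) : R :=
  if k is k'.+1 then
    \sum_a pi h s a * (vP (size h).+1 s a +
       \sum_s' Pt (size h).+1 s a s' * uP_fuel pi p k' (rcons h (s, a)) s')
    + p h s
  else 0.

Definition uP pi p (h : hist) (s : S) : R := uP_fuel pi p (T - size h) h s.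

Definition uP0 pi p : R := \sum_s P0 s * uP pi p [::] s.

Definition uA (pi : hist -> S -> A -> R) (p : hist -> S -> R) (h : hist) (s : S) : R :=
  \sum_a pi h s a * vA (size h).+1 s a - p h s.

(* Reported history r(h): s'_i = r((s_1,a_1,...,s_{i-1},a_{i-1}), s_i);
   [pre] is the true prefix already processed. *)
Fixpoint report_aux (r : hist -> S -> S) (pre : hist) (h : hist) : hist :=
  match h with
  | [::] => [::]
  | (s, a) :: h' => (r pre s, a) :: report_aux r (rcons pre (s, a)) h'
  end.

Definition report (r : hist -> S -> S) (h : hist) : hist := report_aux r [::] h.

Definition uAr (pi : hist -> S -> A -> R) (p : hist -> S -> R)
    (r : hist -> S -> S) (h : hist) (s : S) : R :=
  \sum_a pi (report r h) (r h s) a * vA (size h).+1 s a - p (report r h) (r h s).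

Definition IC (pi : hist -> S -> A -> R) (p : hist -> S -> R) : Prop :=
  forall h s, (size h < T)%N ->
  forall r : hist -> S -> S,
    (forall h' s', (size h' < size h)%N -> r h' s' = s') ->
    uAr pi p r h s <= uA pi p h s.

Definition overall_IR pi p : Prop := 0 <= \sum_s P0 s * uA pi p [::] s.

Definition dynamic_IR pi p : Prop :=
  forall h s, (size h < T)%N -> 0 <= uA pi p h s.

(* pi(h,s) and p(h,s) depend only on |h|, last(h) and s (h in H);
   d is the fixed pair last(emptyset). *)
Definition last_markov (d : S * A) (pi : hist -> S -> A -> R) (p : hist -> S -> R) : Prop :=
  forall h1 h2 s, (size h1 < T)%N -> (size h2 < T)%N ->
    size h1 = size h2 -> last d h1 = last d h2 ->
    (forall a, pi h1 s a = pi h2 s a) /\ p h1 s = p h2 s.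

End Dyn.

Inductive IR_kind := NoIR | OverallIR | DynamicIR.

Definition IR (R : realFieldType) (S A : finType) (vA : nat -> S -> A -> R)
    (P0 : S -> R) (T : nat) (k : IR_kind)
    (pi : seq (S * A) -> S -> A -> R) (p : seq (S * A) -> S -> R) : Prop :=
  match k with
  | NoIR => True
  | OverallIR => overall_IR vA P0 pi p
  | DynamicIR => dynamic_IR T vA pi p
  end.

(* Main.v *)
Require Import Defs.
From mathcomp Require Import all_boot all_order all_algebra.
From mathcomp Require Import zify.
Import Order.TTheory GRing.Theory Num.Theory.
Local Open Scope ring_scope.
Set Implicit Arguments. Unset Strict Implicit.

Lemma exists_max (R : realFieldType) (I : finType) (i0 : I) (F : I -> R) :
  exists i, forall j, F j <= F i.
Proof.
exists (Order.arg_max i0 xpredT F). case: Order.TotalTheory.arg_maxP => // i _ H j.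
exact: H.
Qed.

Section Aux.
Variables (R : realFieldType) (S A : finType) (T : nat).
Local Notation hist := (seq (S * A)).
Variables (vP vA : nat -> S -> A -> R) (P0 : S -> R) (Pt : nat -> S -> A -> S -> R).
Variable (d : S * A).

Definition same_menu (pi1 : hist -> S -> A -> R) (p1 : hist -> S -> R)
  (pi2 : hist -> S -> A -> R) (p2 : hist -> S -> R) h1 h2 :=
  (forall s a, pi1 h1 s a = pi2 h2 s a) /\ (forall s, p1 h1 s = p2 h2 s).

Definition copyM pi' p' pi p :=
  (forall h : hist, (size h < T)%N -> exists g, size g = size h /\ same_menu pi' p' pi p h g)
  /\ same_menu pi' p' pi p [::] [::].

Definition markov_from m pi p := forall h1 h2 : hist, (m <= size h1)%N ->
  (size h1 < T)%N -> size h1 = size h2 -> last d h1 = last d h2 ->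
  same_menu pi p pi p h1 h2.

Lemma report_id (r : hist -> S -> S) pre h :
  (forall h' s', (size h' < size pre + size h)%N -> r h' s' = s') ->
  report_aux r pre h = h.
Proof.
elim: h pre => [|[s a] h IH] pre Hr //=.
rewrite Hr; last by rewrite /=; lia.
rewrite IH // => h' s' H; apply: Hr; rewrite size_rcons /= in H; rewrite /=; lia.
Qed.

Lemma uP_local pi1 p1 pi2 p2 n :
  (forall h : hist, (n <= size h)%N -> same_menu pi1 p1 pi2 p2 h h) ->
  forall k h s, (n <= size h)%N ->
  uP_fuel vP Pt pi1 p1 k h s = uP_fuel vP Pt pi2 p2 k h s.
Proof.
move=> Hm; elim=> [|k IH] h s Hn //=.
have [Hpi Hp] := Hm h Hn.
rewrite Hp; congr (_ + _); apply: eq_bigr => a _; rewrite Hpi.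
congr (_ * (_ + _)); apply: eq_bigr => s' _; congr (_ * _).
apply: IH; rewrite size_rcons; lia.
Qed.

Lemma uP_markov n pi p : markov_from n pi p ->
  forall k h1 h2 s, (k + size h1 <= T)%N -> (n <= size h1)%N ->
  size h1 = size h2 -> last d h1 = last d h2 ->
  uP_fuel vP Pt pi p k h1 s = uP_fuel vP Pt pi p k h2 s.
Proof.
move=> Hm; elim=> [|k IH] h1 h2 s Hk Hn Hs Hl //=.
have [Hpi Hp] := Hm h1 h2 Hn ltac:(lia) Hs Hl.
rewrite Hp -Hs; congr (_ + _); apply: eq_bigr => a _; rewrite Hpi.
congr (_ * (_ + _)); apply: eq_bigr => s' _; congr (_ * _).
apply: IH; rewrite ?size_rcons ?last_rcons //; lia.
Qed.

Lemma uP_step pi1 p1 pi2 p2 (h : hist) s : (size h < T)%N -> is_mech T pi1 ->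
  same_menu pi1 p1 pi2 p2 h h ->
  (forall a, \sum_s' Pt (size h).+1 s a s' * uP T vP Pt pi1 p1 (rcons h (s, a)) s'
     <= \sum_s' Pt (size h).+1 s a s' * uP T vP Pt pi2 p2 (rcons h (s, a)) s') ->
  uP T vP Pt pi1 p1 h s <= uP T vP Pt pi2 p2 h s.
Proof.
rewrite /uP => Hh Hm [Hpi Hp] H.
have -> : (T - size h = (T - (size h).+1).+1)%N by lia.
rewrite /= Hp lerD2r; apply: ler_sum => a _; rewrite -Hpi.
apply: ler_wpM2l; first by have [] := Hm h s Hh.
rewrite lerD2l; move: (H a); by rewrite !size_rcons.
Qed.

Lemma copy_trans pi2 p2 pi1 p1 pi p :
  copyM pi2 p2 pi1 p1 -> copyM pi1 p1 pi p -> copyM pi2 p2 pi p.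
Proof.
move=> [H2 [R2a R2b]] [H1 [R1a R1b]]; split; last first.
  by split => *; rewrite ?R2a ?R1a ?R2b ?R1b.
move=> h Hh; have [g1 [Hs1 [Ha1 Hb1]]] := H2 h Hh.
have [g [Hs [Ha Hb]]] := H1 g1 ltac:(lia).
exists g; split; first lia.
by split => *; rewrite ?Ha1 ?Ha ?Hb1 ?Hb.
Qed.

Lemma copy_mech pi' p' pi p : copyM pi' p' pi p -> is_mech T pi -> is_mech T pi'.
Proof.
move=> [H _] Hm h s Hh; have [g [Hs [Ha _]]] := H h Hh.
have [H1 H2] := Hm g s ltac:(lia).
split; first by move=> a; rewrite Ha.
by rewrite (eq_bigr (fun a => pi g s a)) // => a _; rewrite Ha.
Qed.

Lemma step m pi1 p1 : (0 < m)%N -> (m < T)%N -> is_env T P0 Pt -> is_mech T pi1 ->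
  markov_from m.+1 pi1 p1 -> exists pi2 p2, copyM pi2 p2 pi1 p1 /\
  markov_from m pi2 p2 /\ uP0 T vP P0 Pt pi1 p1 <= uP0 T vP P0 Pt pi2 p2.
Proof.
move=> Hm0 HmT Henv Hmech Hmk.
pose F (x : S * A) (t : (m.-1).-tuple (S * A)) :=
  \sum_s' Pt m x.1 x.2 s' * uP T vP Pt pi1 p1 (rcons t x) s'.
pose gt x := odflt (nseq_tuple m.-1 x) [pick t | [forall u, F x u <= F x t]].
have gtP : forall x u, F x u <= F x (gt x).
  move=> x u; rewrite /gt; case: pickP => [t /forallP H | Hn]; first exact: H.
  have [i Hi] := @exists_max R _ (nseq_tuple m.-1 x) (F x).
  by move: (Hn i) => /forallP; case => j; apply: Hi.
pose g x := rcons (tval (gt x)) x.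
have sg : forall x, size (g x) = m by move=> x; rewrite size_rcons size_tuple; lia.
pose pi2 (h : hist) := if size h == m then pi1 (g (last d h)) else pi1 h.
pose p2 (h : hist) := if size h == m then p1 (g (last d h)) else p1 h.
have same_ne : forall h : hist, size h != m -> same_menu pi1 p1 pi2 p2 h h.
  by move=> h Hh; split => *; rewrite /pi2 /p2 (negbTE Hh).
exists pi2, p2; split; [|split].
- split; last by split => *; rewrite /pi2 /p2 ifN //; apply/eqP; rewrite /=; lia.
  move=> h Hh; case: (size h =P m) => E.
    exists (g (last d h)); split; first by rewrite sg E.
    by split => *; rewrite /pi2 /p2 E eqxx.
  exists h; split => //; split => *; rewrite /pi2 /p2; case: eqP => //.
- move=> h1 h2 Hn Hh Hs Hl; case: (size h1 =P m) => E.
    by split => *; rewrite /pi2 /p2 -Hs E eqxx Hl.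
  have [Ha Hb] := Hmk h1 h2 ltac:(lia) Hh Hs Hl.
  by split => [s a|s]; rewrite /pi2 /p2 -Hs (introF eqP E); [exact: Ha | exact: Hb].
have KEY : forall h : hist, size h = m -> forall s,
    uP T vP Pt pi2 p2 h s = uP T vP Pt pi1 p1 (g (last d h)) s.
  move=> h Hh s; rewrite /uP sg Hh.
  have -> : (T - m = (T - m.+1).+1)%N by lia.
  have Hp2 : p2 h = p1 (g (last d h)) by rewrite /p2 Hh eqxx.
  have Hpi2 : pi2 h = pi1 (g (last d h)) by rewrite /pi2 Hh eqxx.
  rewrite /= sg Hh Hp2 Hpi2; congr (_ + _); apply: eq_bigr => a _.
  congr (_ * (_ + _)); apply: eq_bigr => s' _; congr (_ * _).
  rewrite (@uP_local pi2 p2 pi1 p1 m.+1); last by rewrite size_rcons; lia.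
    apply: (uP_markov Hmk); rewrite ?size_rcons ?last_rcons ?size_tuple ?Hh //; lia.
  move=> h' Hh'; split => *; rewrite /pi2 /p2 ifN //; apply/eqP; lia.
have claim : forall i (h : hist) s, (size h + i.+1 = m)%N ->
    uP T vP Pt pi1 p1 h s <= uP T vP Pt pi2 p2 h s.
  elim=> [|i IH] h s Hs.
    apply: uP_step => //; first lia; first by apply: same_ne; lia.
    move=> a; rewrite [X in _ <= X](eq_bigr (fun s' => Pt (size h).+1 s a s' * uP T vP Pt pi1 p1 (g (s, a)) s')); last first.
      by move=> s' _; rewrite KEY ?last_rcons // size_rcons; lia.
    have Ht : size h == m.-1 by apply/eqP; lia.
    have := gtP (s, a) (Tuple Ht); rewrite /F /=.
    have -> : (size h).+1 = m by lia.
    done.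
  apply: uP_step => //; first lia; first by apply: same_ne; lia.
  move=> a; apply: ler_sum => s' _; apply: ler_wpM2l.
    by case: Henv => _ _ /(_ (size h).+1 s a); case => //; lia.
  by apply: IH; rewrite size_rcons; lia.
rewrite /uP0; apply: ler_sum => s _; apply: ler_wpM2l; first by case: Henv.
by apply: (claim m.-1); rewrite /=; lia.
Qed.

Lemma iter pi p j : is_env T P0 Pt -> is_mech T pi ->
  exists pi' p', copyM pi' p' pi p /\ markov_from (T - j) pi' p' /\
  uP0 T vP P0 Pt pi p <= uP0 T vP P0 Pt pi' p'.
Proof.
move=> Henv Hmech; elim: j => [|j [pi1 [p1 [Hc [Hmk Hu]]]]].
  exists pi, p; split; [|split] => //.
    split; last by split.
    by move=> h Hh; exists h; split.
  move=> h1 h2 H1 H2; lia.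
have Hm1 := copy_mech Hc Hmech.
case: (T - j =P 0)%N => E.
  exists pi1, p1; split; [|split] => //.
  by have -> : (T - j.+1 = T - j)%N by lia.
case: (T - j.+1 =P 0)%N => E2.
  exists pi1, p1; split; [|split] => //.
  rewrite E2 => h1 h2 H1 H2 Hs Hl.
  case: h1 Hs Hl H1 H2 => [|x h1] Hs Hl H1 H2.
    by case: h2 Hs {Hl} => // _; split.
  apply: Hmk => //=; lia.
have HmT : (T - j.+1 < T)%N by lia.
have Hmk' : markov_from (T - j.+1).+1 pi1 p1.
  by have -> : ((T - j.+1).+1 = T - j)%N by lia.
have Hm0 : (0 < T - j.+1)%N by lia.
have [pi2 [p2 [Hc2 [Hmk2 Hu2]]]] := step Hm0 HmT Henv Hm1 Hmk'.
exists pi2, p2; split; [|split] => //.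
  exact: copy_trans Hc2 Hc.
exact: le_trans Hu Hu2.
Qed.

End Aux.

Theorem lemma6 (R : realFieldType) (S A : finType) (T : nat)
    (vP vA : nat -> S -> A -> R) (P0 : S -> R) (Pt : nat -> S -> A -> S -> R)
    (d : S * A) (allowed : bool)
    (pi : seq (S * A) -> S -> A -> R) (p : seq (S * A) -> S -> R) :
  is_env T P0 Pt ->
  is_mech T pi -> payments_ok T allowed p -> IC T vA pi p ->
  exists (pi' : seq (S * A) -> S -> A -> R) (p' : seq (S * A) -> S -> R),
    [/\ is_mech T pi', payments_ok T allowed p', IC T vA pi' p'
      & (forall k : IR_kind, IR vA P0 T k pi p -> IR vA P0 T k pi' p')] /\
    uP0 T vP P0 Pt pi p <= uP0 T vP P0 Pt pi' p' /\
    last_markov T d pi' p'.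
Proof.
move=> Henv Hmech Hpay HIC.
have [pi' [p' [Hc [Hmk Hu]]]] := @iter _ _ _ T vP P0 Pt d pi p T Henv Hmech.
rewrite subnn in Hmk.
have Hc' := Hc; case: Hc' => Hcp [Hra Hrb].
exists pi', p'; split; [split|split] => //.
- exact: copy_mech Hc Hmech.
- move=> Hal h s Hh; have [g [Hs [_ Hb]]] := Hcp h Hh.
  by rewrite Hb Hpay //; lia.
- move=> h s Hh r Hr; rewrite /uAr /uA /report report_id //.
  have [g [Hs [Ha Hb]]] := Hcp h Hh.
  pose r' (h0 : seq (S * A)) (s0 : S) := if h0 == g then r h s else s0.
  have Hr' : forall h0 s0, (size h0 < size g)%N -> r' h0 s0 = s0.
    by move=> h0 s0 H0; rewrite /r' ifN //; apply/eqP => E; rewrite E in H0; lia.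
  have := HIC g s ltac:(lia) r' Hr'.
  rewrite /uAr /uA /report report_id // /r' eqxx Hs.
  move=> H; rewrite !Hb; under eq_bigr do rewrite Ha.
  by under [X in _ <= X - _]eq_bigr do rewrite Ha.
- case => //=.
    rewrite /overall_IR /uA => H; apply: le_trans H _; rewrite le_eqVlt; apply/orP; left.
    apply/eqP; apply: eq_bigr => s _; rewrite Hrb; congr (_ * (_ - _)).
    by apply: eq_bigr => a _; rewrite Hra.
  move=> H h s Hh; have [g [Hs [Ha Hb]]] := Hcp h Hh.
  have := H g s ltac:(lia); rewrite /uA Hb Hs.
  by rewrite (eq_bigr (fun a => pi' h s a * vA (size h).+1 s a)) => [|a _]; last by rewrite Ha.
- move=> h1 h2 s H1 H2 Hs Hl; have [Ha Hb] := Hmk h1 h2 ltac:(lia) H1 Hs Hl.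
  by split.
Qed.
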